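(* Let $N\ge2$ be an integer and let $B=(b_{i,j})_{i,j=1}^{N-1}$ be the symmetric Toeplitz matrix with $b_{i,i}=\frac{2N}{3}-1$, $b_{i,j}=\frac N6-1$ if $|i-j|=1$, and $b_{i,j}=-1$ if $|i-j|\ge2$. Let $L_{N-1}=\mathrm{tridiag}(-1,2,-1)$ be the $(N-1)\times(N-1)$ one-dimensional discrete Laplacian. Then $H:=B-\frac N{12}L_{N-1}$ is positive semi-definite. Moreover, $H$ is singular when $N$ is even and positive definite when $N$ is odd. *)

(* Defs.v *)
From HB Require Import structures.
From mathcomp Require Import all_boot all_order all_algebra.
Set Implicit Arguments. Unset Strict Implicit. Unset Printing Implicit Defensive.
Import Order.TTheory GRing.Theory Num.Theory.
Local Open Scope ring_scope.

Definition idist (i j : nat) : nat := (i - j) + (j - i).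

Definition Bmat (R : realFieldType) (N : nat) : 'M[R]_(N.-1) :=
  \matrix_(i, j)
    if idist i j == 0%N then (2 * N%:R) / 3 - 1
    else if idist i j == 1%N then N%:R / 6 - 1
    else -1.

Definition Lap (R : realFieldType) (n : nat) : 'M[R]_n :=
  \matrix_(i, j)
    if idist i j == 0%N then 2
    else if idist i j == 1%N then -1
    else 0.

Definition Hmat (R : realFieldType) (N : nat) : 'M[R]_(N.-1) :=
  Bmat R N - (N%:R / 12) *: Lap R (N.-1).

Definition psd (R : realFieldType) (n : nat) (A : 'M[R]_n) : Prop :=
  A^T = A /\ forall x : 'cV[R]_n, 0 <= (x^T *m A *m x) 0 0.

Definition pd (R : realFieldType) (n : nat) (A : 'M[R]_n) : Prop :=
  A^T = A /\ forall x : 'cV[R]_n, x != 0 -> 0 < (x^T *m A *m x) 0 0.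

Definition singular (R : realFieldType) (n : nat) (A : 'M[R]_n) : Prop :=
  \det A = 0.

(* Main.v *)
Require Import Defs.
From HB Require Import structures.
From mathcomp Require Import all_boot all_order all_algebra.
From mathcomp Require Import zify ring lra.
Import Order.TTheory GRing.Theory Num.Theory.
Local Open Scope ring_scope.
Set Implicit Arguments. Unset Strict Implicit.

Section Aux.
Variable R : realFieldType.

Definition tt (i j : nat) : R :=
  if i == j then 2 else if (i == j.+1) || (j == i.+1) then 1 else 0.

Lemma idist0 (i j : nat) : (idist i j == 0)%N = (i == j).
Proof. rewrite /idist; lia. Qed.

Lemma idist1 (i j : nat) : (idist i j == 1)%N = (i == j.+1) || (j == i.+1).
Proof. rewrite /idist; lia. Qed.

Lemma Hentry n (i j : 'I_n.+1) :
  Hmat R n.+2 i j = (n.+2%:R / 4) * tt i j - 1.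
Proof.
rewrite /Hmat /Bmat /Lap !mxE idist0 idist1 /tt.
case: (i == j :> nat) => /=; first lra.
case: (_ || _) => /=; lra.
Qed.


Lemma sum_pick (m a : nat) (c : nat -> R) :
  \sum_(0 <= j < m) (if j == a then c j else 0) = if (a < m)%N then c a else 0.
Proof.
elim: m => [|m IH]; first by rewrite big_geq.
rewrite big_nat_recr //= IH.
case: (ltngtP a m) => h.
- have -> : (a < m.+1)%N by lia.
  case: (m =P a) => [?|_]; first lia.
  by rewrite addr0.
- case: (m =P a) => [?|_]; first lia.
  have -> : (a < m.+1)%N = false by lia.
  by rewrite addr0.
- by rewrite ?h ?ltnn ?ltnSn ?eqxx add0r.
Qed.

Lemma lemA (f : nat -> R) (f0 : f 0%N = 0) n :
  \sum_(0 <= i < n) f i.+1 * (f i + 2 * f i.+1 + f i.+2) =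
  \sum_(0 <= k < n) (f k + f k.+1) ^+ 2 + f n ^+ 2 + f n * f n.+1.
Proof.
elim: n => [|n IH]; first by rewrite !big_geq // f0; ring.
rewrite !big_nat_recr //= IH; ring.
Qed.

Lemma lemB (f : nat -> R) n :
  \sum_(0 <= k < n.+1) (f k + f k.+1) = 2 * \sum_(0 <= i < n) f i.+1 + f 0%N + f n.+1.
Proof.
elim: n => [|n IH]; first by rewrite big_nat1 big_geq //; ring.
rewrite big_nat_recr //= IH big_nat_recr //=; ring.
Qed.

Lemma lemC (y : nat -> R) N :
  N%:R * \sum_(0 <= k < N) y k ^+ 2 - (\sum_(0 <= k < N) y k) ^+ 2 =
  2^-1 * \sum_(0 <= k < N) \sum_(0 <= l < N) (y k - y l) ^+ 2.
Proof.
have -> : \sum_(0 <= k < N) \sum_(0 <= l < N) (y k - y l) ^+ 2 =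
   \sum_(0 <= k < N) (N%:R * y k ^+ 2 + \sum_(0 <= l < N) y l ^+ 2
       - 2 * y k * \sum_(0 <= l < N) y l).
  apply: eq_bigr => k _.
  have -> : N%:R * y k ^+ 2 = \sum_(0 <= l < N) y k ^+ 2.
    by rewrite sumr_const_nat subn0 mulr_natl.
  rewrite mulr_sumr -big_split -sumrB /=; apply: eq_bigr => l _; ring.
rewrite sumrB big_split /= -mulr_sumr -mulr_suml -mulr_sumr sumr_const_nat subn0.
rewrite -mulr_natl; set S := \sum_(0 <= k < N) y k; set T := \sum_(0 <= k < N) y k ^+ 2.
by field.
Qed.


Definition fext n (g : nat -> R) (k : nat) : R :=
  match k with 0%N => 0 | k'.+1 => if (k' < n.+1)%N then g k' else 0 end.

Lemma tt_split (g : nat -> R) i j : g i * tt i j =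
  (if i == j then 2 * g i else 0) + (if i == j.+1 then g i else 0)
  + (if i.+1 == j then g i else 0).
Proof.
rewrite /tt.
case: (i =P j) => [e|ne]; case: (i =P j.+1) => [e'|ne']; case: (i.+1 =P j) => [e''|ne''];
  case: (j =P i.+1) => [f|nf] /=; try lia.
all: by rewrite ?mulr1 ?mulr0 ?addr0 ?add0r // mulrC.
Qed.

Lemma row_tt n (g : nat -> R) j : (j < n.+1)%N ->
  \sum_(0 <= i < n.+1) g i * tt i j =
  fext n g j + 2 * fext n g j.+1 + fext n g j.+2.
Proof.
move=> hj.
under eq_bigr do rewrite tt_split.
rewrite !big_split /= (sum_pick n.+1 j (fun i => 2 * g i)) (sum_pick n.+1 j.+1 g) hj /=.
case: j hj => [|j] hj.
  by rewrite big1 // ?addr0 add0r addrC.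
under eq_bigr do rewrite eqSS.
rewrite (sum_pick n.+1 j g) (ltnW hj) /=.
have -> : (j < n.+1)%N by lia.
set u := if _ then _ else _; ring.
Qed.

End Aux.

Lemma qform (R : realFieldType) n (x : 'cV[R]_n.+1) :
  (x^T *m Hmat R n.+2 *m x) 0 0 =
  8^-1 * \sum_(0 <= k < n.+2) \sum_(0 <= l < n.+2)
     ((fext n (fun k => x (inord k) 0) k + fext n (fun k => x (inord k) 0) k.+1)
    - (fext n (fun k => x (inord k) 0) l + fext n (fun k => x (inord k) 0) l.+1)) ^+ 2.
Proof.
set g := fun k => x (inord k) 0.
set f := fext n g.
set c : R := n.+2%:R / 4.
have E : (x^T *m Hmat R n.+2 *m x) 0 0 =
    \sum_(0 <= j < n.+1) (\sum_(0 <= i < n.+1) g i * (c * tt R i j - 1)) * g j.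
  rewrite mxE big_mkord; apply: eq_bigr => j _.
  rewrite mxE big_mkord /g inord_val; congr (_ * _); apply: eq_bigr => i _.
  by rewrite Hentry !mxE inord_val.
set T := \sum_(0 <= i < n.+1) f i.+1.
have gf : forall j, (j < n.+1)%N -> g j = f j.+1 by move=> j hj; rewrite /f /= hj.
have ST : \sum_(0 <= i < n.+1) g i = T by apply: eq_big_nat => i /andP [_ hi]; rewrite gf.
have E2 : (x^T *m Hmat R n.+2 *m x) 0 0 =
    \sum_(0 <= j < n.+1) (c * (f j + 2 * f j.+1 + f j.+2) - T) * f j.+1.
  rewrite E; apply: eq_big_nat => j /andP [_ hj].
  rewrite gf //; congr (_ * _).
  under eq_bigr do rewrite mulrBr mulr1 mulrCA.
  by rewrite sumrB -mulr_sumr row_tt // ST.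
have fn2 : f n.+2 = 0 by rewrite /f /= ltnn.
have f0 : f 0%N = 0 by [].
clearbody f.
have hA := lemA f0 n.+1.
have hB := lemB f n.+1.
have hC := lemC (fun k => f k + f k.+1) n.+2.
rewrite fn2 f0 !addr0 -/T in hB.
rewrite -/f.
set DD := \sum_(0 <= k < n.+2) _.
rewrite hB /= big_nat_recr //= fn2 addr0 in hC.
rewrite fn2 mulr0 addr0 in hA.
have -> : DD = 2 * (n.+2%:R * (\sum_(0 <= k < n.+1) (f k + f k.+1) ^+ 2 + f n.+1 ^+ 2)
     - (2 * T) ^+ 2).
  by rewrite hC -/DD mulrA mulfV ?mul1r //; lra.
apply: (etrans E2).
under eq_bigr do rewrite mulrBl mulrC.
rewrite sumrB.
under [X in X - _ = _]eq_bigr do rewrite mulrCA.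
rewrite -!mulr_sumr -/T hA /c.
by field.
Qed.

Lemma tt_sym (R : realFieldType) i j : tt R i j = tt R j i.
Proof. by rewrite /tt (eq_sym i j) orbC. Qed.

Lemma rowH (R : realFieldType) n (g : nat -> R) (j : 'I_n.+1) :
  \sum_(i < n.+1) g i * Hmat R n.+2 i j =
  (n.+2%:R / 4) * (fext n g j + 2 * fext n g j.+1 + fext n g j.+2)
  - \sum_(0 <= i < n.+1) g i.
Proof.
under eq_bigr do rewrite Hentry mulrBr mulr1 mulrCA.
rewrite sumrB -mulr_sumr.
rewrite -(big_mkord xpredT (fun i => g i * tt R i j)) -(big_mkord xpredT g).
by rewrite row_tt.
Qed.

Theorem lemma4p4 (R : realFieldType) (N : nat) (hN : (2 <= N)%N) :
  psd (Hmat R N) /\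
  (~~ odd N -> singular (Hmat R N)) /\
  (odd N -> pd (Hmat R N)).
Proof.
case: N hN => [|[|n]] // _.
have sym : (Hmat R n.+2)^T = Hmat R n.+2.
  by apply/matrixP => i j; rewrite mxE !Hentry tt_sym.
split; [|split].
- split => // x; rewrite qform; apply: mulr_ge0; first by rewrite invr_ge0 ler0n.
  by apply: sumr_ge0 => k _; apply: sumr_ge0 => l _; apply: sqr_ge0.
- move=> /= ev; rewrite /singular; apply/eqP/det0P.
  set g : nat -> R := fun i => if odd i then 0 else 1.
  exists (\row_(i < n.+1) g i).
    apply/eqP => /rowP /(_ ord0); rewrite !mxE /g /=; apply/eqP; exact: oner_neq0.
  apply/rowP => j; rewrite mxE [RHS]mxE.
  have vE : forall i : 'I_n.+1, (\row_(i < n.+1) g i) 0 i = g i by move=> i; rewrite mxE.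
  under eq_bigr do rewrite vE.
  rewrite rowH.
  have fE : forall k, (k <= n.+2)%N -> fext n g k = (odd k)%:R.
    case=> [|k] hk //=.
    case: ltnP => hk'.
      by rewrite /g; case: (odd k).
    have -> : k = n.+1 by lia.
    by rewrite /= (negPf ev).
  have hB := lemB (fext n g) n.+1.
  have Sg : \sum_(0 <= i < n.+1) g i = \sum_(0 <= i < n.+1) fext n g i.+1.
    by apply: eq_big_nat => i /andP [_ hi] /=; rewrite hi.
  rewrite -Sg /= in hB.
  have hS : \sum_(0 <= k < n.+2) (fext n g k + fext n g k.+1) = n.+2%:R.
    rewrite -[n.+2 in RHS]subn0 -sumr_const_nat.
    apply: eq_big_nat => k /andP [_ hk].
    have hk1 : (k <= n.+2)%N by lia.
    have hk2 : (k.+1 <= n.+2)%N by lia.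
    rewrite !fE //=.
    by case: (odd k); rewrite /= ?add0r ?addr0.
  rewrite hS in hB.
  have jn : (j < n.+1)%N := ltn_ord j.
  rewrite !fE /=; try lia.
  have e0 : fext n g n.+2 = 0 by rewrite fE //= (negPf ev).
  rewrite ltnn addr0 addr0 in hB.
  have -> : \sum_(0 <= i < n.+1) g i = n.+2%:R / 2.
    by rewrite hB; field.
  rewrite negbK.
  by case: (odd j) => /=; field.
- move=> /= on; split => // x xnz.
  rewrite qform.
  set g := fun k => x (inord k) 0.
  set f := fext n g.
  set DD := \sum_(0 <= k < n.+2) _.
  have DDge : 0 <= DD.
    by apply: sumr_ge0 => k _; apply: sumr_ge0 => l _; apply: sqr_ge0.
  rewrite lt0r mulr_ge0 ?invr_ge0 ?ler0n // andbT mulf_neq0 //; first by rewrite gt_eqF //; lra.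
  apply/eqP => D0.
  have yk : forall k, (k < n.+2)%N -> f k + f k.+1 = f 1%N.
    move=> k hk.
    have h1 : \sum_(0 <= l < n.+2) (f k + f k.+1 - (f l + f l.+1)) ^+ 2 = 0.
      move: D0; rewrite /DD big_mkord => D0.
      exact: (@psumr_eq0P _ _ _ _ (fun i _ => sumr_ge0 _ (fun l _ => sqr_ge0 _)) D0 (Ordinal hk) isT).
    rewrite big_mkord in h1.
    have h2 := @psumr_eq0P _ _ _ _ (fun l _ => sqr_ge0 _) h1 (@ord0 n.+1) isT.
    move: h2; rewrite /= => /eqP; rewrite sqrf_eq0 subr_eq0 => /eqP ->.
    have f0 : f 0%N = 0 by [].
    by rewrite /= add0r.
  have fk : forall k, (k <= n.+2)%N -> f k = (odd k)%:R * f 1%N.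
    elim=> [|k IH] hk; first by rewrite mul0r.
    have := yk k hk; rewrite IH; last by lia.
    rewrite oddS.
    case: (odd k); rewrite ?mulr0n ?mulr1n ?mul1r ?mul0r => e.
      by apply: (@addrI _ (f 1%N)); rewrite e addr0.
    by rewrite add0r in e.
  have f1 : f 1%N = 0.
    have := fk n.+2 (leqnn _).
    by rewrite /= on /f /= ltnn mul1r => <-.
  move/eqP: xnz; apply.
  apply/matrixP => i j; rewrite (ord1 j) [RHS]mxE.
  have hi : (i.+1 <= n.+2)%N by have := ltn_ord i; lia.
  have := fk _ hi.
  rewrite f1 mulr0 /f /= ltn_ord /g inord_val.
  done.
Qed.
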